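(* Let $\varepsilon>0$, $\eta^\varepsilon_{\mu\nu}=\mathrm{diag}(1-i\varepsilon,-1,-1,-1)$, and for $x=(x_0,\mathbf{x})\in\mathbb{R}^4$ set $z^2=\eta^\varepsilon_{\mu\nu}x^\mu x^\nu=(1-i\varepsilon)x_0^2-\mathbf{x}^2$ and $x_E^2=x_0^2+\mathbf{x}^2$. Then $$|\sqrt{-z^2}|\le(1+\varepsilon^2)^{1/4}|x_E|,\qquad |\sqrt{-z^2}|\ge\Big(\tfrac1\varepsilon+\sqrt{1+\tfrac{1}{\varepsilon^2}}\Big)^{-1/2}|x_E|.$$ *)

(* Defs.v *)
From HB Require Import structures.
From mathcomp Require Import all_boot all_order all_algebra.
From mathcomp Require Export complex.
Set Implicit Arguments. Unset Strict Implicit. Unset Printing Implicit Defensive.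
Import Order.TTheory GRing.Theory Num.Theory.
Local Open Scope ring_scope.

Definition spatial_sq (R : rcfType) (xs : 'rV[R]_3) : R :=
  \sum_(i < 3) xs 0 i ^+ 2.

(* z^2 = eta^eps_{mu nu} x^mu x^nu = (1 - i eps) x0^2 - bold x^2  (complex) *)
Definition zsq (R : rcfType) (eps x0 : R) (xs : 'rV[R]_3) : R[i] :=
  ((x0 ^+ 2 - spatial_sq xs) +i* (- (eps * x0 ^+ 2)))%C.

Definition xE2 (R : rcfType) (x0 : R) (xs : 'rV[R]_3) : R :=
  x0 ^+ 2 + spatial_sq xs.

(* Main.v *)
Require Import Defs.
From HB Require Import structures.
From mathcomp Require Import all_boot all_order all_algebra.
From mathcomp Require Import complex.
From mathcomp Require Import ring lra.
Import Order.TTheory GRing.Theory Num.Theory.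
Local Open Scope ring_scope.

Theorem lemma4 (R : rcfType) (eps : R) (heps : 0 < eps) (x0 : R) (xs : 'rV[R]_3) :
  ComplexField.Normc.normc (sqrtc (- zsq eps x0 xs))
    <= Num.sqrt (Num.sqrt (1 + eps ^+ 2)) * Num.sqrt (xE2 x0 xs)
  /\
  Num.sqrt ((eps^-1 + Num.sqrt (1 + (eps ^+ 2)^-1))^-1) * Num.sqrt (xE2 x0 xs)
    <= ComplexField.Normc.normc (sqrtc (- zsq eps x0 xs)).
Proof.
have hs : 0 <= spatial_sq xs by apply: sumr_ge0 => i _; rewrite sqr_ge0.
have ha : 0 <= x0 ^+ 2 by rewrite sqr_ge0.
set a := x0 ^+ 2 in ha *; set s := spatial_sq xs in hs *.
set M := (s - a) ^+ 2 + (eps * a) ^+ 2.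
have hM : 0 <= M by rewrite addr_ge0 ?sqr_ge0.
have Hw : ComplexField.Normc.normc (- zsq eps x0 xs) = Num.sqrt M.
  rewrite /zsq /= /M; congr (Num.sqrt _); rewrite -/a -/s; ring.
set N := Num.sqrt M.
have hN : 0 <= N by rewrite sqrtr_ge0.
have hN2 : N ^+ 2 = M by rewrite sqr_sqrtr.
have HS : ComplexField.Normc.normc (sqrtc (- zsq eps x0 xs)) = Num.sqrt N.
  set S := sqrtc _.
  have h0 : 0 <= ComplexField.Normc.normc S by case: S => u v; rewrite /= sqrtr_ge0.
  have h2 : ComplexField.Normc.normc S ^+ 2 = N.
    by rewrite expr2 -ComplexField.Normc.normcM -expr2 sqr_sqrtc Hw.
  by rewrite -h2 sqrtr_sqr ger0_norm.
rewrite HS /xE2 -/a -/s.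
have hX : 0 <= a + s by rewrite addr_ge0.
split.
  set q := Num.sqrt (1 + eps ^+ 2).
  have hq : 0 <= q by rewrite sqrtr_ge0.
  have hq2 : q ^+ 2 = 1 + eps ^+ 2 by rewrite sqr_sqrtr // addr_ge0 ?sqr_ge0.
  rewrite -sqrtrM // ler_sqrt ?mulr_ge0 //.
  have key : N ^+ 2 <= (q * (a + s)) ^+ 2.
    rewrite hN2 exprMn hq2 /M -subr_ge0.
    have -> : (1 + eps ^+ 2) * (a + s) ^+ 2 - ((s - a) ^+ 2 + (eps * a) ^+ 2)
      = 4 * (a * s) + eps ^+ 2 * (2 * (a * s) + s ^+ 2) by ring.
    have h1 := mulr_ge0 ha hs.
    have h2 : 0 <= eps ^+ 2 * (2 * (a * s) + s ^+ 2).
      by apply: mulr_ge0; [exact: sqr_ge0 | apply: addr_ge0; [lra | exact: sqr_ge0]].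
    lra.
  have hqX : 0 <= q * (a + s) by rewrite mulr_ge0.
  nra.
set r := Num.sqrt (1 + (eps ^+ 2)^-1).
set e := eps^-1.
have he : e * eps = 1 by rewrite mulVf // gt_eqF.
have he0 : 0 < e by rewrite invr_gt0.
have hr : 0 <= r by rewrite sqrtr_ge0.
have hr2 : r ^+ 2 = 1 + e ^+ 2.
  by rewrite sqr_sqrtr ?exprVn // addr_ge0 ?invr_ge0 ?sqr_ge0.
have hd : 0 < e + r by rewrite ltr_wpDr.
have hdi : 0 <= (e + r)^-1 by rewrite invr_ge0 ltW.
rewrite -sqrtrM // ler_sqrt // mulrC ler_pdivrMr //.
have hre : e <= r by nra.
have hd2 : 1 + 4 * e ^+ 2 <= (e + r) ^+ 2 by nra.
have k1 : eps ^+ 2 * (a + s) ^+ 2 <= (eps ^+ 2 + 4) * M.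
  rewrite -subr_ge0.
  have -> : (eps ^+ 2 + 4) * M - eps ^+ 2 * (a + s) ^+ 2 = (2 * (s - a) - eps ^+ 2 * a) ^+ 2.
    rewrite /M; ring.
  exact: sqr_ge0.
have k2 : (a + s) ^+ 2 <= (1 + 4 * e ^+ 2) * M.
  have he2 : e ^+ 2 * eps ^+ 2 = 1 by rewrite -exprMn he expr1n.
  have := ler_wpM2l (sqr_ge0 e) k1.
  have -> : e ^+ 2 * (eps ^+ 2 * (a + s) ^+ 2) = (a + s) ^+ 2.
    by rewrite mulrA he2 mul1r.
  have -> : e ^+ 2 * ((eps ^+ 2 + 4) * M) = (1 + 4 * e ^+ 2) * M.
    apply/eqP; rewrite -subr_eq0.
    have -> : e ^+ 2 * ((eps ^+ 2 + 4) * M) - (1 + 4 * e ^+ 2) * M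
      = (e ^+ 2 * eps ^+ 2 - 1) * M by ring.
    by rewrite he2 subrr mul0r.
  done.
have k3 : (a + s) ^+ 2 <= (N * (e + r)) ^+ 2.
  rewrite exprMn hN2 mulrC; apply: (le_trans k2); exact: ler_wpM2r.
have hNd : 0 <= N * (e + r) by rewrite mulr_ge0 // ltW.
nra.
Qed.
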